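(* Let $\mathcal{H}_C=\mathcal{H}_{A_1}\oplus\cdots\oplus\mathcal{H}_{A_n}$ be a finite-dimensional Hilbert space decomposed into mutually orthogonal subspaces with orthogonal projectors $\hat P_{A_\ell A_\ell}$, and let $\Phi_{CC}$ be a quantum channel on $\mathcal{H}_C$ with Kraus set $\{\hat M^{(j)}_{CC}\}_j$. Then $\Phi_{CC}$ admits the multi-block PCDS structure if and only if $\hat M^{(j)}_{CC}=\bigoplus_{\ell=1}^n\hat M^{(j)}_{A_\ell A_\ell}$ for all $j$, equivalently $\hat M^{(j)}_{A_\ell A_{\ell'}}=0$ for all $j$ and all $\ell\ne\ell'$, where $\hat M^{(j)}_{A_\ell A_{\ell'}}=\hat P_{A_\ell A_\ell}\hat M^{(j)}_{CC}\hat P_{A_{\ell'}A_{\ell'}}$.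
   Context: For an operator $\hat\Theta_{CC}$ on $\mathcal{H}_C$ let $\hat\Theta_{A_\ell A_{\ell'}}=\hat P_{A_\ell A_\ell}\hat\Theta_{CC}\hat P_{A_{\ell'}A_{\ell'}}$. A channel $\Phi_{CC}$ has the multi-block PCDS structure if there are linear maps $\Phi_{A_\ell A_\ell}$ on operators $\mathcal{H}_{A_\ell}\to\mathcal{H}_{A_\ell}$ and $\Phi^{(off)}_{A_\ell A_{\ell'}}$ ($\ell\neq\ell'$) on operators $\mathcal{H}_{A_{\ell'}}\to\mathcal{H}_{A_\ell}$ such that $\Phi_{CC}[\hat\Theta_{CC}]=\sum_{\ell}\Phi_{A_\ell A_\ell}[\hat\Theta_{A_\ell A_\ell}]+\sum_{\ell\neq\ell'}\Phi^{(off)}_{A_\ell A_{\ell'}}[\hat\Theta_{A_\ell A_{\ell'}}]$ for all $\hat\Theta_{CC}$. *)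

(* Defs.v *)
From HB Require Import structures.
From mathcomp Require Import all_boot all_order all_algebra.
From mathcomp Require Import reals.
From mathcomp Require Import complex.
Set Implicit Arguments. Unset Strict Implicit. Unset Printing Implicit Defensive.
Import Order.TTheory GRing.Theory Num.Theory.
Local Open Scope ring_scope.

Section Defs.
Variable C : numClosedFieldType.
Variable d : nat.

Definition adjmx (A : 'M[C]_d) : 'M[C]_d := (map_mx Num.conj A)^T.

Definition orth_decomposition (n : nat) (P : 'I_n -> 'M[C]_d) : Prop :=
  [/\ forall l, adjmx (P l) = P l,
      forall l, P l *m P l = P l,
      forall l l', l != l' -> P l *m P l' = 0
    & \sum_(l < n) P l = 1%:M].

Definition kraus_channel (m : nat) (M : 'I_m -> 'M[C]_d)
  (Phi : 'M[C]_d -> 'M[C]_d) : Prop :=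
  \sum_(j < m) adjmx (M j) *m M j = 1%:M /\
  forall Theta, Phi Theta = \sum_(j < m) M j *m Theta *m adjmx (M j).

Definition blk (n : nat) (P : 'I_n -> 'M[C]_d) (l l' : 'I_n) (Theta : 'M[C]_d)
  : 'M[C]_d := P l *m Theta *m P l'.

(* The space of operators H_{A_l'} -> H_{A_l}, realised inside 'M_d as the
   matrices X with P_l X P_l' = X. *)
Definition in_blk (n : nat) (P : 'I_n -> 'M[C]_d) (l l' : 'I_n) (X : 'M[C]_d)
  : Prop := P l *m X *m P l' = X.

(* F is a linear map from operators H_{A_l'} -> H_{A_l} to operators
   H_{A_l'} -> H_{A_l} (only its values on that block space matter). *)
Definition blk_linear_map (n : nat) (P : 'I_n -> 'M[C]_d) (l l' : 'I_n)
  (F : 'M[C]_d -> 'M[C]_d) : Prop :=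
  (forall X, in_blk P l l' X -> in_blk P l l' (F X)) /\
  (forall (a : C) X Y, in_blk P l l' X -> in_blk P l l' Y ->
      F (a *: X + Y) = a *: F X + F Y).

Definition multiblock_PCDS (n : nat) (P : 'I_n -> 'M[C]_d)
  (Phi : 'M[C]_d -> 'M[C]_d) : Prop :=
  exists (Fd : 'I_n -> 'M[C]_d -> 'M[C]_d)
         (Foff : 'I_n -> 'I_n -> 'M[C]_d -> 'M[C]_d),
    (forall l, blk_linear_map P l l (Fd l)) /\
    (forall l l', l != l' -> blk_linear_map P l l' (Foff l l')) /\
    forall Theta,
      Phi Theta = \sum_(l < n) Fd l (blk P l l Theta)
                + \sum_(l < n) \sum_(l' < n | l != l') Foff l l' (blk P l l' Theta).

End Defs.

(* Main.v *)
Require Import Defs.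
From HB Require Import structures.
From mathcomp Require Import all_boot all_order all_algebra.
From mathcomp Require Import reals.
From mathcomp Require Import complex.
Import Order.TTheory GRing.Theory Num.Theory.
Local Open Scope ring_scope.
Local Open Scope complex_scope.
Set Implicit Arguments. Unset Strict Implicit.

Section Helpers.
Variable C : numClosedFieldType.
Variable d : nat.
Implicit Types A B X : 'M[C]_d.

Lemma adjM A B : adjmx (A *m B) = adjmx B *m adjmx A.
Proof. by rewrite /adjmx map_mxM trmx_mul. Qed.

Lemma adjK A : adjmx (adjmx A) = A.
Proof. by apply/matrixP => i j; rewrite !mxE conjCK. Qed.

Lemma sum_NN0 (m : nat) (N : 'I_m -> 'M[C]_d) :
  \sum_(j < m) N j *m adjmx (N j) = 0 -> forall j, N j = 0.
Proof.
move=> H.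
have Htr : \sum_(j < m) \sum_(i < d) \sum_(k < d) `|N j i k| ^+ 2 = 0.
  have T : \sum_(j < m) \tr (N j *m adjmx (N j)) = 0.
    by rewrite -raddf_sum H raddf0.
  rewrite -[RHS]T.
  apply: eq_bigr => j _; rewrite /mxtrace; apply: eq_bigr => i _.
  rewrite mxE; apply: eq_bigr => k _; rewrite !mxE normCK //.
move=> j; apply/matrixP => i k; rewrite mxE.
have h1 := psumr_eq0P (fun j _ => sumr_ge0 _ (fun i _ => sumr_ge0 _ (fun k _ => exprn_ge0 2 (normr_ge0 _)))) Htr (i:=j) isT.
have h2 := psumr_eq0P (fun i _ => sumr_ge0 _ (fun k _ => exprn_ge0 2 (normr_ge0 _))) h1 (i:=i) isT.
have h3 := psumr_eq0P (fun k _ => exprn_ge0 2 (normr_ge0 _)) h2 (i:=k) isT.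
by move/eqP: h3; rewrite sqrf_eq0 normr_eq0 => /eqP.
Qed.

Variable n : nat.
Variable P : 'I_n -> 'M[C]_d.
Hypothesis HP : orth_decomposition P.

Lemma Padj l : adjmx (P l) = P l. Proof. by case: HP. Qed.
Lemma Pidem l : P l *m P l = P l. Proof. by case: HP. Qed.
Lemma Porth {l l'} : l != l' -> P l *m P l' = 0. Proof. by case: HP => _ _ h _; apply: h. Qed.
Lemma Psum : \sum_(l < n) P l = 1%:M. Proof. by case: HP. Qed.

Lemma full X : X = \sum_(l < n) \sum_(l' < n) blk P l l' X.
Proof.
rewrite /blk.
transitivity ((\sum_(l < n) P l) *m X *m (\sum_(l' < n) P l')).
  by rewrite Psum mul1mx mulmx1.
rewrite mulmx_suml mulmx_suml; apply: eq_bigr => l _.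
by rewrite mulmx_sumr.
Qed.

Lemma part2 X : X = \sum_(l < n) blk P l l X <->
  (forall l l', l != l' -> blk P l l' X = 0).
Proof.
split.
  move=> HX a b hab; rewrite /blk HX mulmx_sumr mulmx_suml.
  apply: big1 => l _; rewrite /blk.
  have [<-|hla] := eqVneq a l.
    by rewrite !mulmxA -mulmxA (Porth hab) mulmx0.
  by rewrite !mulmxA (Porth hla) !mul0mx.
move=> H; rewrite {1}[X]full; apply: eq_bigr => l _.
rewrite (bigD1 l) //= big1 ?addr0 // => l' hl'.
by apply: H; rewrite eq_sym.
Qed.

Lemma F0 l l' (F : 'M[C]_d -> 'M[C]_d) : blk_linear_map P l l' F -> F 0 = 0.
Proof.
case=> _ lin.
have h0 : in_blk P l l' 0 by rewrite /in_blk mulmx0 mul0mx.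
have := lin 1 0 0 h0 h0; rewrite !scale1r addr0 => H.
by apply/(@addrI _ (F 0)); rewrite addr0 -H.
Qed.

End Helpers.

Theorem theorem3 (R : realType) (d n m : nat)
  (P : 'I_n -> 'M[R[i]]_d) (M : 'I_m -> 'M[R[i]]_d)
  (Phi : 'M[R[i]]_d -> 'M[R[i]]_d) :
  orth_decomposition P ->
  kraus_channel M Phi ->
  (multiblock_PCDS P Phi <->
     (forall j, M j = \sum_(l < n) blk P l l (M j))) /\
  ((forall j, M j = \sum_(l < n) blk P l l (M j)) <->
     (forall j (l l' : 'I_n), l != l' -> blk P l l' (M j) = 0)).
Proof.
move=> HP [_ HK].
have E2 : (forall j, M j = \sum_(l < n) blk P l l (M j)) <->
     (forall j (l l' : 'I_n), l != l' -> blk P l l' (M j) = 0).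
  split=> H j; first by apply/(part2 HP).
  by apply/(part2 HP); apply: H.
split=> //; rewrite E2; split.
- case=> Fd [Foff [Hd [Ho HPhi]]] j a l hal.
  have HPl : Phi (P l) = Fd l (P l).
    rewrite HPhi.
    rewrite (bigD1 l) //= big1 => [|k hk]; last first.
      by rewrite /blk ((Porth HP) hk) !mul0mx (F0 (Hd k)).
    rewrite [X in _ + X]big1 => [|k _]; last first.
      apply: big1 => k' hk.
      have -> : blk P k k' (P l) = 0.
        rewrite /blk; have [ekl|hkl] := eqVneq k l.
          rewrite -mulmxA.
          have -> : P l *m P k' = 0 by apply: (Porth HP); rewrite -ekl.
          by rewrite mulmx0.
        by rewrite ((Porth HP) hkl) !mul0mx.
      exact: (F0 (Ho _ _ hk)).
    by rewrite /blk !addr0 !(Pidem HP).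
  have Hin : in_blk P l l (Phi (P l)).
    rewrite HPl; apply: (proj1 (Hd l)).
    by rewrite /in_blk !(Pidem HP).
  have Z : P a *m Phi (P l) *m P a = 0.
    by rewrite -Hin /in_blk !mulmxA (Porth HP) // !mul0mx.
  have := sum_NN0 (N := fun j => P a *m M j *m P l).
  move=> /(_ _ j); rewrite /blk; apply.
  rewrite -[RHS]Z HK mulmx_sumr mulmx_suml; apply: eq_bigr => k _.
  rewrite !adjM !(Padj HP).
  by rewrite !mulmxA -(mulmxA _ (P l) (P l)) (Pidem HP).
- move=> Hoff.
  have comm : forall (X : 'M[R[i]]_d), (forall l l', l != l' -> blk P l l' X = 0) ->
      forall l, P l *m X = X *m P l.
    move=> X HX l.
    transitivity (blk P l l X).
      rewrite -[P l *m X]mulmx1 -(Psum HP) mulmx_sumr (bigD1 l) //= big1 ?addr0 //.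
      by move=> k hk; apply: HX; rewrite eq_sym.
    rewrite -[X *m P l]mul1mx -(Psum HP) mulmx_suml (bigD1 l) //= big1 ?addr0 ?mulmxA //.
    by move=> k hk; rewrite mulmxA; apply: HX.
  have cM : forall j l, P l *m M j = M j *m P l by move=> j; apply: comm; apply: Hoff.
  have cA : forall j l, P l *m adjmx (M j) = adjmx (M j) *m P l.
    move=> j; apply: comm => a b hab.
    rewrite /blk -[P a](Padj HP) -[P b](Padj HP) -!adjM mulmxA [X in adjmx X]Hoff 1?eq_sym //.
    by apply/matrixP => x y; rewrite !mxE rmorph0.
  have linD : forall A B, Phi (A + B) = Phi A + Phi B.
    by move=> A B; rewrite !HK -big_split; apply: eq_bigr => j _; rewrite mulmxDr mulmxDl.
  have lin0 : Phi 0 = 0.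
    by rewrite HK big1 // => j _; rewrite mulmx0 mul0mx.
  have linear : forall l l', blk_linear_map P l l' Phi.
    move=> l l'; split.
      move=> X HX; rewrite /in_blk HK mulmx_sumr mulmx_suml; apply: eq_bigr => j _.
      rewrite !mulmxA cM -!mulmxA -cA !mulmxA -(mulmxA _ X).
      by rewrite -(mulmxA (M j) (P l)) (mulmxA (P l)) HX.
    move=> a X Y _ _; rewrite !HK scaler_sumr -big_split; apply: eq_bigr => j _.
    by rewrite mulmxDr mulmxDl -scalemxAr -scalemxAl.
  exists (fun _ => Phi), (fun _ _ => Phi); split; first by move=> l; apply: linear.
  split; first by move=> l l' _; apply: linear.
  move=> Theta; rewrite {1}[Theta](full HP).
  rewrite (big_morph Phi linD lin0) -big_split; apply: eq_bigr => l _.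
  rewrite (big_morph Phi linD lin0) (bigD1 l) //=.
  by under [in RHS]eq_bigl do rewrite eq_sym.
Qed.
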